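(* Let $A_1,\dots,A_k$ be independent events with probabilities $p_1,\dots,p_k$, and let $r_1,\dots,r_k\ge 0$ be constants such that for every $S\subseteq\{1,\dots,k\}$, $$\sum_{i\in S} r_i \le 1-\prod_{i\in S}(1-p_i).$$ Then there is a probability distribution over permutations $\pi$ of $\{1,\dots,k\}$ such that, when $\pi$ is drawn from this distribution independently of the events, for every $i$, $$\Pr\big(A_i \text{ is the earliest occurring event in } \pi\big)\ \ge\ r_i,$$ where ''$A_i$ is the earliest occurring event in $\pi$'' means that $A_i$ occurs and no $A_j$ with $j$ preceding $i$ in $\pi$ occurs. *)

(* Defs.v *)
From HB Require Import structures.
From mathcomp Require Import all_boot all_order all_algebra all_fingroup.
Set Implicit Arguments. Unset Strict Implicit. Unset Printing Implicit Defensive.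
Import Order.TTheory GRing.Theory Num.Theory.
Local Open Scope ring_scope.

Definition is_distr (R : realFieldType) (T : finType) (mu : T -> R) : Prop :=
  (forall w, 0 <= mu w) /\ \sum_(w : T) mu w = 1.

Definition Pr (R : realFieldType) (T : finType) (mu : T -> R) (E : {set T}) : R :=
  \sum_(w in E) mu w.

Definition mutually_independent (R : realFieldType) (T : finType) (k : nat)
    (mu : T -> R) (A : 'I_k -> {set T}) : Prop :=
  forall S : {set 'I_k},
    Pr mu (\bigcap_(i in S) A i) = \prod_(i in S) Pr mu (A i).

(* "A_i is the earliest occurring event in pi": A_i occurs and no A_j with j
   preceding i in pi occurs.  Convention: pi j is the position of j, so
   j precedes i iff pi j < pi i. *)
Definition first_event (T : finType) (k : nat) (A : 'I_k -> {set T})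
    (pi : {perm 'I_k}) (i : 'I_k) : {set T} :=
  A i :&: \bigcap_(j | (pi j < pi i)%N) ~: A j.

(* Main.v *)
Require Import Defs.
From HB Require Import structures.
From mathcomp Require Import all_boot all_order all_algebra all_fingroup.
From mathcomp Require Import ring lra zify.
From Stdlib Require Import Classical_Prop.
Import Order.TTheory GRing.Theory Num.Theory.
Local Open Scope ring_scope.

Set Implicit Arguments. Unset Strict Implicit.
Section Main.
Variable R : realFieldType.
Variable k : nat.
Variable p : 'I_k -> R.
Hypothesis p_ge0 : forall i, 0 <= p i.
Hypothesis p_le1 : forall i, p i <= 1.

Lemma ex_minim (T : finType) (P : pred T) (F : T -> R) x0 :
  P x0 -> exists x, P x /\ forall y, P y -> F x <= F y.
Proof. move=> Px0; case: (arg_minP F Px0) => x Px H; exists x; split=> // y Py; exact: H. Qed.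

Definition g (S : {set 'I_k}) : R := \prod_(j in S) (1 - p j).

Lemma g_ge0 S : 0 <= g S.
Proof. by apply: prodr_ge0 => j _; rewrite subr_ge0. Qed.

Lemma g_le1 S : g S <= 1.
Proof.
apply: prodr_ile1 => j _; rewrite subr_ge0 p_le1 /=.
by rewrite lerBlDr lerDl.
Qed.

Lemma gU (S T : {set 'I_k}) : [disjoint S & T] -> g (S :|: T) = g S * g T.
Proof. by move=> dST; rewrite /g -bigU //; apply: eq_bigl => j; rewrite !inE. Qed.

Definition fval (s : seq 'I_k) (i : 'I_k) : R :=
  p i * \prod_(j | (index j s < index i s)%N) (1 - p j).

Definition ordering (V : {set 'I_k}) (s : seq 'I_k) :=
  uniq s /\ (forall j, (j \in s) = (j \in V)).

Definition feasible (V : {set 'I_k}) (r : 'I_k -> R) :=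
  (forall i, 0 <= r i) /\
  (forall S : {set 'I_k}, S \subset V -> \sum_(i in S) r i <= 1 - g S).

Definition solvable (V : {set 'I_k}) (r : 'I_k -> R) :=
  exists m : seq (R * seq 'I_k),
    (forall x, x \in m -> 0 <= x.1 /\ ordering V x.2) /\
    \sum_(x <- m) x.1 = 1 /\
    (forall i, i \in V -> r i <= \sum_(x <- m) x.1 * fval x.2 i).

Lemma solvable_mono V r r' : solvable V r' -> (forall i, i \in V -> r i <= r' i) ->
  solvable V r.
Proof.
case=> m [h1 [h2 h3]] hr; exists m; split=> //; split=> // i iV.
exact: le_trans (hr i iV) (h3 i iV).
Qed.

Lemma solvable_conv V r1 r2 a b : solvable V r1 -> solvable V r2 ->
  0 <= a -> 0 <= b -> a + b = 1 ->
  solvable V (fun i => a * r1 i + b * r2 i).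
Proof.
case=> m1 [h1 [s1 v1]] [m2 [h2 [s2 v2]]] a0 b0 ab.
exists ([seq (a * x.1, x.2) | x <- m1] ++ [seq (b * x.1, x.2) | x <- m2]).
split; [|split].
- move=> x; rewrite mem_cat => /orP [] /mapP [y ym ->] /=.
    by case: (h1 y ym) => y0 oy; rewrite mulr_ge0.
  by case: (h2 y ym) => y0 oy; rewrite mulr_ge0.
- by rewrite big_cat !big_map /= -!mulr_sumr s1 s2 !mulr1.
- move=> i iV; rewrite big_cat !big_map /=.
  under eq_bigr do rewrite -mulrA.
  under [X in _ <= _ + X]eq_bigr do rewrite -mulrA.
  rewrite -!mulr_sumr; apply: lerD; apply: ler_wpM2l => //; [exact: v1|exact: v2].
Qed.

Lemma solvable0 r : solvable set0 r.
Proof.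
exists [:: (1, [::])]; split; [|split].
- by move=> x; rewrite inE => /eqP -> /=; split=> //; split=> // j; rewrite inE.
- by rewrite big_seq1.
- by move=> i; rewrite inE.
Qed.

Lemma solvable1 i r : r i <= p i -> solvable [set i] r.
Proof.
move=> ri; exists [:: (1, [:: i])]; split; [|split].
- move=> x; rewrite inE => /eqP -> /=; split=> //; split=> // j.
  by rewrite !inE.
- by rewrite big_seq1.
- move=> j; rewrite inE => /eqP ->; rewrite big_seq1 mul1r /fval /= eqxx.
  by rewrite big_pred0 ?mulr1 // => j'; rewrite ltn0.
Qed.


Lemma val_cat_l s1 s2 i : i \in s1 -> fval (s1 ++ s2) i = fval s1 i.
Proof.
move=> is1; rewrite /fval; congr (_ * _); apply: eq_bigl => j.
rewrite !index_cat is1; case: ifP => // js1.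
have := index_mem i s1; rewrite is1 => lt.
rewrite (memNindex (negbT js1)); apply/idP/idP => h.
  by move: (leq_ltn_trans (leq_addr _ _) h); rewrite ltnNge ltnW.
by move: (ltn_trans h lt); rewrite ltnn.
Qed.

Lemma val_cat_r S s1 s2 i : ordering S s1 -> i \in s2 -> i \notin s1 ->
  (forall j, j \in s2 -> j \notin s1) -> fval (s1 ++ s2) i = g S * fval s2 i.
Proof.
move=> [u1 m1] is2 ins1 dis; rewrite /fval mulrCA; congr (_ * _).
rewrite (bigID (fun j => j \in s1)) /=; congr (_ * _).
  apply: eq_bigl => j; rewrite !index_cat (negbTE ins1) -m1.
  case: ifP => js1; rewrite ?andbT ?andbF //.
  by move: (index_mem j s1); rewrite js1 => h; apply: (leq_trans h); rewrite leq_addr.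
apply: eq_bigl => j; rewrite !index_cat (negbTE ins1).
case: ifP => js1 /=; last by rewrite ltn_add2l andbT.
rewrite andbF; apply/esym/negbTE; apply/negP => h.
have : j \in s2 by rewrite -index_mem (ltn_trans h) // index_mem.
by move/dis; rewrite js1.
Qed.

Lemma solvable_cat (V S : {set 'I_k}) r1 r2 : S \subset V -> solvable S r1 -> solvable (V :\: S) r2 ->
  solvable V (fun i => if i \in S then r1 i else g S * r2 i).
Proof.
move=> sSV [m1 [h1 [s1 v1]]] [m2 [h2 [s2 v2]]].
exists [seq (x.1 * y.1, x.2 ++ y.2) | x <- m1, y <- m2].
split; [|split].
- move=> z /allpairsP [[x y] [xm ym ->]] /=.
  case: (h1 x xm) => x0 [ux mx]; case: (h2 y ym) => y0 [uy my].
  split; first by rewrite mulr_ge0.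
  split.
    rewrite cat_uniq ux uy /= andbT; apply/hasPn => j; rewrite my mx !inE.
    by case/andP=> ->.
  move=> j; rewrite mem_cat mx my !inE.
  by case jS: (j \in S) => //=; rewrite (subsetP sSV).
- have -> : [seq (x.1 * y.1, x.2 ++ y.2) | x <- m1, y <- m2] =
     map (fun xy => (xy.1.1 * xy.2.1, xy.1.2 ++ xy.2.2)) [seq (x, y) | x <- m1, y <- m2].
    by rewrite map_allpairs.
  rewrite big_map big_allpairs /=.
  under eq_bigr do rewrite -mulr_sumr s2 mulr1.
  exact: s1.
- have -> : [seq (x.1 * y.1, x.2 ++ y.2) | x <- m1, y <- m2] =
     map (fun xy => (xy.1.1 * xy.2.1, xy.1.2 ++ xy.2.2)) [seq (x, y) | x <- m1, y <- m2].
    by rewrite map_allpairs.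
  move=> i iV; rewrite big_map big_allpairs /=.
  case: ifP => iS.
    rewrite (le_trans (v1 i iS)) // le_eqVlt; apply/orP; left; apply/eqP.
    apply: eq_big_seq => x xm.
    case: (h1 x xm) => _ [_ mx].
    rewrite -[LHS]mulr1 -s2 mulr_sumr; apply: eq_big_seq => y ym.
    by rewrite val_cat_l ?mx // mulrAC.
  have iVS : i \in V :\: S by rewrite !inE iS iV.
  have -> : \sum_(x <- m1) \sum_(y <- m2) x.1 * y.1 * fval (x.2 ++ y.2) i =
            \sum_(x <- m1) x.1 * (g S * \sum_(y <- m2) y.1 * fval y.2 i).
    apply: eq_big_seq => x xm; case: (h1 x xm) => _ ox.
    rewrite !mulr_sumr; apply: eq_big_seq => y ym.
    case: (h2 y ym) => _ [uy my].
    rewrite (@val_cat_r S) //; last 3 first.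
    + by rewrite my.
    + by rewrite ox.2 iS.
    + by move=> j; rewrite my ox.2 !inE => /andP [].
    by rewrite -!mulrA; congr (_ * _); rewrite mulrCA.
  rewrite -mulr_suml s1 mul1r; apply: ler_wpM2l; first exact: g_ge0.
  exact: v2.
Qed.


Lemma sum_ind (T : {set 'I_k}) i : \sum_(x in T) ((x == i)%:R : R) = (i \in T)%:R.
Proof.
case iT: (i \in T).
  rewrite (bigD1 i) //= eqxx big1 ?addr0 // => x /andP [_ /negbTE ->] //.
apply: big1 => x xT; case: eqP => // xi; by move: iT; rewrite -xi xT.
Qed.

Lemma sum_shift (T : {set 'I_k}) (r : 'I_k -> R) t i j :
  \sum_(x in T) (r x + t * ((x == i)%:R - (x == j)%:R)) =
  \sum_(x in T) r x + t * ((i \in T)%:R - (j \in T)%:R).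
Proof. by rewrite big_split /= -mulr_sumr sumrB !sum_ind. Qed.

Lemma sumU (S T : {set 'I_k}) (r : 'I_k -> R) : [disjoint S & T] ->
  \sum_(x in S :|: T) r x = \sum_(x in S) r x + \sum_(x in T) r x.
Proof.
move=> d; rewrite (@eq_bigl _ _ _ _ _ _ [predU S & T]); last by move=> x; rewrite !inE.
by rewrite bigU.
Qed.

Lemma sumU1 (S : {set 'I_k}) (r : 'I_k -> R) i : i \notin S ->
  \sum_(x in S :|: [set i]) r x = \sum_(x in S) r x + r i.
Proof.
move=> iS; rewrite (@eq_bigl _ _ _ _ _ _ [predU S & [set i]]); last by move=> x; rewrite !inE.
by rewrite bigU ?big_set1 // disjoint_sym disjoints1.
Qed.

Lemma stepA (V : {set 'I_k}) r
  (IH : forall (W : {set 'I_k}) r, (#|W| < #|V|)%N -> feasible W r -> solvable W r) (S : {set 'I_k}) :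
  feasible V r -> S \subset V -> S != set0 -> S != V ->
  1 - g S <= \sum_(i in S) r i -> solvable V r.
Proof.
move=> [r0 fr] sSV S0 SV tS.
have tS' : \sum_(i in S) r i = 1 - g S by apply/eqP; rewrite eq_le fr // tS.
pose r2 := fun i => r i / g S.
have hS : solvable S r.
  apply: IH; first by apply: proper_card; rewrite properEneq SV sSV.
  split=> // T sTS; apply: fr; exact: subset_trans sTS sSV.
have hVS : solvable (V :\: S) r2.
  apply: IH.
    rewrite cardsD (setIidPr sSV).
    have : (0 < #|S|)%N by rewrite card_gt0.
    have := subset_leq_card sSV; lia.
  split; first by move=> i; rewrite /r2 divr_ge0 // g_ge0.
  move=> T sT.
  have dTS : [disjoint T & S].
    rewrite disjoint_subset; apply/subsetP => x xT; move: (subsetP sT x xT).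
    by rewrite !inE => /andP [].
  case gS0: (g S == 0).
    rewrite /r2 (eqP gS0) invr0 big1 ?subr_ge0 ?g_le1 // => i _; exact: mulr0.
  have gSp : 0 < g S by rewrite lt_def gS0 g_ge0.
  rewrite /r2 -mulr_suml ler_pdivrMr //.
  have := fr (T :|: S); rewrite sumU // gU // tS'.
  have -> : (T :|: S \subset V) = true.
    by rewrite subUset sSV andbT; apply: subset_trans sT _; apply: subsetDl.
  have := g_ge0 T; have := g_le1 T.
  move=> *; nra.
apply: (@solvable_mono V r _ (@solvable_cat V S r r2 sSV hS hVS)) => i iV.
case: ifP => iS //.
case gS0: (g S == 0); last first.
  by rewrite /r2 mulrC divfK ?gS0.
rewrite (eqP gS0) mul0r.
have := fr (S :|: [set i]); rewrite sumU1 ?iS //.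
rewrite gU; last by rewrite disjoint_sym disjoints1 iS.
rewrite /g big_set1 -/(g S) (eqP gS0) mul0r subr0 tS' (eqP gS0) subr0.
rewrite subUset sSV sub1set iV /= => h.
by rewrite -(lerD2l 1) addr0 h.
Qed.

Lemma bump (V : {set 'I_k}) r i : feasible V r -> i \in V ->
  exists r' (S : {set 'I_k}), feasible V r' /\ (forall j, r j <= r' j) /\
    S \subset V /\ i \in S /\ 1 - g S <= \sum_(j in S) r' j.
Proof.
move=> [r0 fr] iV.
have [S [/andP [sSV iS] Smin]] := @ex_minim _ (fun T : {set 'I_k} => (T \subset V) && (i \in T))
  (fun T => 1 - g T - \sum_(j in T) r j) V (introT andP (conj (subxx V) iV)).
set t := 1 - g S - \sum_(j in S) r j.
have t0 : 0 <= t by rewrite subr_ge0 fr.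
exists (fun x => r x + t * (x == i)%:R).
have ss : forall T : {set 'I_k}, \sum_(x in T) (r x + t * (x == i)%:R) = \sum_(x in T) r x + t * (i \in T)%:R.
  by move=> T; rewrite big_split /= -mulr_sumr sum_ind.
exists S; split; [split|split].
- by move=> x; rewrite addr_ge0 // mulr_ge0.
- move=> T sT; rewrite ss; case iT: (i \in T); last first.
    by rewrite mulr0 addr0 fr.
  have := Smin T; rewrite sT iT => /(_ isT).
  rewrite mulr1 /= -/t => h.
  by rewrite -lerBrDl (le_trans h).
- by move=> x; rewrite lerDl mulr_ge0.
- split=> //; split=> //.
  rewrite ss iS mulr1 /t; lra.
Qed.

Lemma shift (V : {set 'I_k}) r i j : feasible V r -> 1 - g V <= \sum_(x in V) r x ->
  (forall S : {set 'I_k}, S \subset V -> S != set0 -> S != V -> \sum_(x in S) r x < 1 - g S) ->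
  i \in V -> j \in V -> i != j ->
  exists t, 0 < t /\ feasible V (fun x => r x + t * ((x == i)%:R - (x == j)%:R)) /\
   exists S : {set 'I_k}, [/\ S \subset V, S != set0, S != V &
      1 - g S <= \sum_(x in S) (r x + t * ((x == i)%:R - (x == j)%:R))].
Proof.
move=> [r0 fr] tV nt iV jV ij.
have x0 : (V :\ j \subset V) && (i \in V :\ j) && (j \notin V :\ j).
  by rewrite subsetDl !inE eqxx iV ij.
have [S [/andP [/andP [sSV iS] jS] Smin]] := @ex_minim _
  (fun T : {set 'I_k} => (T \subset V) && (i \in T) && (j \notin T))
  (fun T => 1 - g T - \sum_(x in T) r x) _ x0.
set t := 1 - g S - \sum_(x in S) r x.
have S0 : S != set0 by apply/set0Pn; exists i.
have SV : S != V by apply/eqP => SV; move: jS; rewrite SV jV.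
have t0 : 0 < t by rewrite subr_gt0 nt.
have tj : t <= r j.
  apply: le_trans (Smin _ x0) _.
  move: tV; rewrite /g (big_setD1 j jV) (big_setD1 j jV) /= -/(g (V :\ j)).
  have := g_ge0 (V :\ j); have := p_ge0 j; move=> *; nra.
exists t; split=> //; split; [split|].
- move=> x; case: (eqVneq x i) => [->|xi]; first by rewrite (negbTE ij) subr0 mulr1 addr_ge0 // ltW.
  rewrite sub0r; case: (eqVneq x j) => [->|xj]; last by rewrite oppr0 mulr0 addr0.
  by rewrite mulrN1 subr_ge0.
- move=> T sT; rewrite sum_shift.
  case iT: (i \in T); case jT: (j \in T); rewrite ?subrr ?mulr0 ?addr0 ?fr //.
  + have := Smin T; rewrite sT iT jT => /(_ isT) h.
    by rewrite subr0 mulr1 -lerBrDl (le_trans h).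
  + by rewrite sub0r mulrN1 lerBlDr (le_trans (fr _ sT)) // lerDl ltW.
- exists S; split=> //.
  by rewrite sum_shift iS (negbTE jS) subr0 mulr1 /t; lra.
Qed.

Lemma stepB (V : {set 'I_k}) r
  (A : forall r', feasible V r' -> (exists S : {set 'I_k}, [/\ S \subset V, S != set0, S != V &
      1 - g S <= \sum_(x in S) r' x]) -> solvable V r') i j :
  feasible V r -> 1 - g V <= \sum_(x in V) r x ->
  (forall S : {set 'I_k}, S \subset V -> S != set0 -> S != V -> \sum_(x in S) r x < 1 - g S) ->
  i \in V -> j \in V -> i != j -> solvable V r.
Proof.
move=> fr tV nt iV jV ij.
have [t1 [t10 [f1 e1]]] := shift fr tV nt iV jV ij.
have [t2 [t20 [f2 e2]]] := shift fr tV nt jV iV ltac:(by rewrite eq_sym).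
have h1 := A _ f1 e1.
have h2 := A _ f2 e2.
have t12 : t1 + t2 != 0 by rewrite gt_eqF // addr_gt0.
have := solvable_conv h1 h2 (a := t2 / (t1 + t2)) (b := t1 / (t1 + t2)).
move=> /(_ _ _ _) hc.
apply: (@solvable_mono V r _ (hc _ _ _)).
- by rewrite divr_ge0 // ?ltW // addr_gt0.
- by rewrite divr_ge0 // ?ltW // addr_gt0.
- by field.
move=> x _; rewrite le_eqVlt; apply/orP; left; apply/eqP.
set d := ((x == i)%:R - (x == j)%:R).
have -> : ((x == j)%:R - (x == i)%:R) = - d by rewrite /d opprB.
field; done.
Qed.

Lemma main n : forall (V : {set 'I_k}) r, (#|V| <= n)%N -> feasible V r -> solvable V r.
Proof.
elim: n => [|n IH] V r hV fr.
  have V0 : V = set0 by apply: cards0_eq; lia.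
  by rewrite V0; apply: solvable0.
have IH' : forall (W : {set 'I_k}) r, (#|W| < #|V|)%N -> feasible W r -> solvable W r.
  by move=> W r' h; apply: IH; lia.
have A : forall r', feasible V r' -> (exists S : {set 'I_k}, [/\ S \subset V, S != set0, S != V &
      1 - g S <= \sum_(x in S) r' x]) -> solvable V r'.
  by move=> r' f' [S [s1 s2 s3 s4]]; exact: (stepA IH' f' s1 s2 s3 s4).
case: (ltnP 1 #|V|) => hV2.
  have /card_gt0P [i iV] : (0 < #|V|)%N by lia.
  have [r' [S [f' [le' [sSV [iS tS]]]]]] := bump fr iV.
  apply: (@solvable_mono V r r'); last by move=> x _; exact: le'.
  case: (classic (exists S : {set 'I_k}, [/\ S \subset V, S != set0, S != V &
      1 - g S <= \sum_(x in S) r' x])) => [ex|nex]; first exact: A.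
  have nt : forall S : {set 'I_k}, S \subset V -> S != set0 -> S != V -> \sum_(x in S) r' x < 1 - g S.
    move=> T a b c; rewrite ltNge; apply/negP => h; apply: nex; exists T; split=> //.
  have SV : S = V.
    apply/eqP; apply/negPn/negP => SV; apply: nex; exists S; split=> //.
    by apply/set0Pn; exists i.
  rewrite SV in tS.
  have [i' [j' [i'V j'V ij]]] := card_gt1P hV2.
  exact: (stepB A f' tS nt i'V j'V ij).
case: (posnP #|V|) => h0.
  by rewrite (cards0_eq h0); apply: solvable0.
have /cards1P [i Vi] : #|V| == 1%N by apply/eqP; lia.
rewrite Vi; apply: solvable1.
case: fr => _ fr; have := fr [set i]; rewrite Vi subxx big_set1 /g big_set1 => /(_ isT).
by rewrite opprB addrC subrK.
Qed.

End Main.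

Section Prob.
Variable R : realFieldType.
Variable k : nat.
Variable Omega : finType.
Variable mu : Omega -> R.
Variable A : 'I_k -> {set Omega}.
Hypothesis hind : mutually_independent mu A.

Lemma PrID (Y B : {set Omega}) : Pr mu Y = Pr mu (Y :&: B) + Pr mu (Y :&: ~: B).
Proof. by rewrite /Pr (@big_setID _ _ _ _ Y B) setDE. Qed.

Lemma disjI (X Y : {set 'I_k}) : (forall x, x \in X -> x \notin Y) -> [disjoint X & Y].
Proof. move=> H; rewrite disjoint_subset; apply/subsetP => x xX; rewrite inE; exact: H. Qed.

Lemma indep_compl n : forall (J I : {set 'I_k}), (#|J| <= n)%N -> [disjoint I & J] ->
  Pr mu ((\bigcap_(j in I) A j) :&: \bigcap_(j in J) ~: A j) =
  \prod_(j in I) Pr mu (A j) * \prod_(j in J) (1 - Pr mu (A j)).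
Proof.
elim: n => [|n IH] J I hJ dIJ.
  have -> : J = set0 by apply: cards0_eq; lia.
  by rewrite !big_set0 setIT mulr1 hind.
case: (posnP #|J|) => h0.
  rewrite (cards0_eq h0).
  by rewrite !big_set0 setIT mulr1 hind.
have /card_gt0P [j0 j0J] := h0.
have dI : forall x, x \in I -> x \notin J by move=> x xI; rewrite (disjointFr dIJ xI).
have j0I : j0 \notin I by apply/negP => /dI; rewrite j0J.
have hJ' : (#|J :\ j0| <= n)%N.
  by move: hJ; rewrite (cardsD1 j0 J) j0J add1n ltnS.
have d1 : [disjoint I & J :\ j0] by apply: disjI => x /dI xJ; rewrite !inE (negbTE xJ) andbF.
have d2 : [disjoint j0 |: I & J :\ j0].
  apply: disjI => x; rewrite !inE => /orP [/eqP ->|/dI xJ]; first by rewrite eqxx.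
  by rewrite (negbTE xJ) andbF.
rewrite (big_setD1 j0 j0J) /= [in RHS](big_setD1 j0 j0J) /=.
set X := \bigcap_(j in I) A j; set Z := \bigcap_(j in J :\ j0) ~: A j.
have -> : X :&: (~: A j0 :&: Z) = (X :&: Z) :&: ~: A j0.
  by rewrite [~: A j0 :&: Z]setIC setIA.
have e1 := IH _ _ hJ' d1.
have e2 := IH _ _ hJ' d2.
rewrite (big_setU1 _ j0I) /= in e2.
rewrite (big_setU1 _ j0I) /= in e2.
have := PrID (X :&: Z) (A j0).
rewrite e1.
have -> : X :&: Z :&: A j0 = (A j0 :&: X) :&: Z by rewrite -setIA [Z :&: _]setIC setIA [X :&: _]setIC.
rewrite e2 => h.
have -> : Pr mu (X :&: Z :&: ~: A j0) =
  \prod_(j in I) Pr mu (A j) * \prod_(j in J :\ j0) (1 - Pr mu (A j)) -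
  Pr mu (A j0) * \prod_(j in I) Pr mu (A j) * \prod_(j in J :\ j0) (1 - Pr mu (A j)).
  by rewrite h addrC addKr.
ring.
Qed.

End Prob.


Lemma perm_of_seq k (s : seq 'I_k) : uniq s -> (forall j, j \in s) ->
  exists pi : {perm 'I_k}, forall j, (pi j : nat) = index j s.
Proof.
move=> us alls.
have sz : size s = k.
  by rewrite -(card_uniqP us) -[RHS]card_ord; apply: eq_card => j; rewrite alls.
have lt : forall j, (index j s < k)%N by move=> j; have := index_mem j s; rewrite alls sz.
pose f := fun j => Ordinal (lt j).
have finj : injective f.
  move=> a b /(congr1 val) /= e.
  by rewrite -(nth_index a (alls a)) e (nth_index a (alls b)).
by exists (perm finj) => j; rewrite permE.
Qed.

Lemma first_prob (R : realFieldType) k (Omega : finType) (mu : Omega -> R)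
  (A : 'I_k -> {set Omega}) (p : 'I_k -> R) :
  mutually_independent mu A -> (forall i, Pr mu (A i) = p i) ->
  forall (s : seq 'I_k) (pi : {perm 'I_k}), (forall j, (pi j : nat) = index j s) ->
  forall i, Pr mu (first_event A pi i) = fval p s i.
Proof.
move=> hind hp s pi hpi i.
rewrite /first_event /fval.
have -> : \bigcap_(j | (pi j < pi i)%N) ~: A j =
    \bigcap_(j in [set j | (index j s < index i s)%N]) ~: A j.
  by apply: eq_bigl => j; rewrite inE !hpi.
have -> : A i = \bigcap_(j in [set i]) A j by rewrite big_set1.
rewrite (@indep_compl _ _ _ _ _ hind k); last 2 first.
- by rewrite -[X in (_ <= X)%N]card_ord max_card.
- by rewrite disjoints1 inE ltnn.
rewrite big_set1 hp; congr (_ * _).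
by apply: eq_big => j; rewrite ?inE ?hp.
Qed.

Lemma mix_to_q (R : realFieldType) k (Omega : finType) (mu : Omega -> R)
  (A : 'I_k -> {set Omega}) (p : 'I_k -> R) :
  mutually_independent mu A -> (forall i, Pr mu (A i) = p i) ->
  forall m : seq (R * seq 'I_k),
  (forall x, x \in m -> 0 <= x.1 /\ ordering [set: 'I_k] x.2) ->
  exists q : {perm 'I_k} -> R, (forall pi, 0 <= q pi) /\
    \sum_pi q pi = \sum_(x <- m) x.1 /\
    forall i, \sum_pi q pi * Pr mu (first_event A pi i) = \sum_(x <- m) x.1 * fval p x.2 i.
Proof.
move=> hind hp; elim=> [|x m IH] hm.
  exists (fun _ => 0); split=> //; split; first by rewrite big_nil big1.
  by move=> i; rewrite big_nil big1 // => pi _; rewrite mul0r.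
have [q [q0 [qs qv]]] : exists q : {perm 'I_k} -> R, (forall pi, 0 <= q pi) /\
    \sum_pi q pi = \sum_(x <- m) x.1 /\
    forall i, \sum_pi q pi * Pr mu (first_event A pi i) = \sum_(x <- m) x.1 * fval p x.2 i.
  by apply: IH => y ym; apply: hm; rewrite inE ym orbT.
have [x0 [ux mx]] := hm x (mem_head _ _).
have [pix hpix] : exists pi : {perm 'I_k}, forall j, (pi j : nat) = index j x.2.
  by apply: perm_of_seq => // j; rewrite mx inE.
exists (fun pi => q pi + x.1 * (pi == pix)%:R); split; [|split].
- by move=> pi; rewrite addr_ge0 // mulr_ge0.
- rewrite big_split /= big_cons qs addrC; congr (_ + _).
  rewrite -mulr_sumr (bigD1 pix) //= eqxx big1 ?addr0 ?mulr1 // => pi /negbTE ->.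
  by [].
- move=> i; rewrite big_cons.
  rewrite (eq_bigr (fun pi => q pi * Pr mu (first_event A pi i) +
     x.1 * (pi == pix)%:R * Pr mu (first_event A pi i))); last by move=> pi _; rewrite mulrDl.
  rewrite big_split /= qv addrC; congr (_ + _).
  rewrite (bigD1 pix) //= eqxx big1 ?addr0 ?mulr1.
    by rewrite (first_prob hind hp hpix).
  by move=> pi /negbTE ->; rewrite mulr0 mul0r.
Qed.

Unset Implicit Arguments. Set Strict Implicit.

Theorem lemma1 (R : realFieldType) (k : nat) (Omega : finType)
    (mu : Omega -> R) (A : 'I_k -> {set Omega}) (p r : 'I_k -> R) :
  is_distr mu ->
  mutually_independent mu A ->
  (forall i, Pr mu (A i) = p i) ->
  (forall i, 0 <= r i) ->
  (forall S : {set 'I_k}, \sum_(i in S) r i <= 1 - \prod_(i in S) (1 - p i)) ->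
  exists q : {perm 'I_k} -> R,
    is_distr q /\
    (forall i, r i <= \sum_(pi : {perm 'I_k}) q pi * Pr mu (first_event A pi i)).
Proof.
move=> [mu0 mu1] hind hp r0 hr.
have p0 : forall i, 0 <= p i by move=> i; rewrite -hp /Pr sumr_ge0.
have p1 : forall i, p i <= 1.
  move=> i; rewrite -hp -mu1 /Pr [X in _ <= X](bigID (fun w => w \in A i)) /=.
  by rewrite lerDl sumr_ge0.
have fr : feasible p [set: 'I_k] r by split.
have [m [hm [ms mv]]] := main p0 p1 (leqnn _) fr.
have [q [q0 [qs qv]]] := mix_to_q hind hp hm.
exists q; split; first by split=> //; rewrite qs ms.
by move=> i; rewrite qv; apply: mv; rewrite inE.
Qed.
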